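(* Define $d_1=d_2=5/36$ and, for $l\ge 2$, $d_{l+1} = d_l + \sum_{i=1}^{l-1} \frac{d_i d_{l-i}}{(l+1)\binom{l}{i}}$. Then $\frac{1}{2\pi}-d_l = O(1/l)$ as $l\to\infty$.
   Context: It is known (Wright; Voblyi) that $(d_l)$ is increasing and converges to $1/(2\pi)$. *)

(* Defs.v *)
From Stdlib Require Import Reals Lra Lia List.
Open Scope R_scope.

(* nth value (1-indexed) in a list; default 0 *)
Definition dget (s : list R) (i : nat) : R := nth (i - 1) s 0.

Definition dnext (s : list R) (l : nat) : R :=
  dget s l +
  fold_right Rplus 0
    (map (fun i => dget s i * dget s (l - i) / (INR (l + 1) * Binomial.C l i))
         (seq 1 (l - 1))).

Fixpoint dl_list (n : nat) : list R :=
  match n with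
  | O => nil
  | S O => (5/36) :: nil
  | S (S O) => (5/36) :: (5/36) :: nil
  | S ((S (S _)) as m) => let s := dl_list m in s ++ (dnext s m :: nil)
  end.

(* d l = d_l for l >= 1 (d 0 = 0 is an unused junk value). *)
Definition d (l : nat) : R := dget (dl_list l) l.

(* Main.v *)
Require Import Defs.
From Stdlib Require Import Reals Lra Lia List Factorial Nsatz.
From Coquelicot Require Import Coquelicot.
Open Scope R_scope.

Definition jf (c:R) (n:nat) (t:R) := cos (c*t) * cos t ^ n.

Lemma jf_cont c n t : continuous (jf c n) t.
Proof. apply (ex_derive_continuous (V:=R_NormedModule) (jf c n)). unfold jf. auto_derive. auto. Qed.

Lemma jf_ex c n a b : ex_RInt (jf c n) a b.
Proof. apply (ex_RInt_continuous (V:=R_CompleteNormedModule)). intros; apply jf_cont. Qed.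

Definition J (c : R) (n : nat) : R := RInt (jf c n) 0 (PI/2).

Lemma RInt_lin (f g : R -> R) a b (x y : R) :
  ex_RInt f a b -> ex_RInt g a b ->
  RInt (fun t => x * f t - y * g t) a b = x * RInt f a b - y * RInt g a b.
Proof.
  intros Hf Hg. apply is_RInt_unique.
  pose proof (is_RInt_minus _ _ _ _ _ _ (is_RInt_scal _ _ _ x _ (RInt_correct _ _ _ Hf))
     (is_RInt_scal _ _ _ y _ (RInt_correct _ _ _ Hg))) as H.
  apply (is_RInt_ext _ _ _ _ _ (fun t _ => eq_refl)) in H.
  exact H.
Qed.
Lemma Hder c n t : is_derive (fun t => (INR n + 2) * cos t ^ (n+1) * sin t * cos(c*t) - c * cos t ^ (n+2) * sin (c*t)) t
   (((INR n + 2)^2 - c^2) * jf c (n+2) t - (INR n+2)*(INR n+1) * jf c n t).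
Proof. auto_derive. 2:{ unfold jf.
 replace (Init.Nat.pred (n+1)) with n by lia; replace (Init.Nat.pred (n+2)) with (S n) by lia.
 replace (n+2)%nat with (S (S n)) by lia. replace (n+1)%nat with (S n) by lia.
 rewrite !S_INR. simpl pow.
 pose proof (sin2_cos2 t) as Hs. unfold Rsqr in Hs.
 generalize (cos t ^ n) (INR n) Hs. intros C N H. nsatz. }
 auto.
Qed.

Lemma jf_lin_cont A B c d m n x : continuous (fun t => A * jf c m t - B * jf d n t) x.
Proof. apply (ex_derive_continuous (V:=R_NormedModule)). unfold jf. auto_derive. auto. Qed.

Lemma J_rec c n : ((INR n + 2)^2 - c^2) * J c (n+2) = (INR n+2)*(INR n+1) * J c n.
Proof.
  unfold J. apply Rminus_diag_uniq. rewrite <- RInt_lin by apply jf_ex.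
  rewrite (is_RInt_unique _ _ _ _ (is_RInt_derive _ _ 0 (PI/2) (fun x _ => Hder c n x)
     (fun x _ => jf_lin_cont _ _ c c _ _ x))).
  unfold minus, plus, opp; simpl. rewrite cos_PI2, Rmult_0_r, sin_0.
    replace (n+1)%nat with (S n) by lia. replace (n+2)%nat with (S (S n)) by lia. simpl. ring.
Qed.

Lemma J0_0 : J 0 0 = PI/2.
Proof.
  unfold J. rewrite (RInt_ext _ (fun _ => 1)).
  - rewrite RInt_const. unfold scal; simpl. unfold mult; simpl. rewrite Rmult_1_r. apply Rminus_0_r.
  - intros x _. unfold jf. rewrite Rmult_0_l, cos_0. simpl. apply Rmult_1_r.
Qed.

Lemma cos_01 x : 0 < x < PI/2 -> 0 <= cos x <= 1.
Proof. intros. pose proof PI_RGT_0. split. apply cos_ge_0; lra. apply COS_bound. Qed.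

Lemma J_mono0 n : J 0 (S n) <= J 0 n.
Proof.
  unfold J. pose proof PI_RGT_0. apply RInt_le; try apply jf_ex. lra.
  intros x Hx. unfold jf. rewrite Rmult_0_l, cos_0. simpl.
  destruct (cos_01 x Hx). pose proof (pow_le (cos x) n H0). nra.
Qed.

Lemma J_le0 c n : J c n <= J 0 n.
Proof.
  unfold J. pose proof PI_RGT_0. apply RInt_le; try apply jf_ex. lra.
  intros x Hx. unfold jf. rewrite Rmult_0_l, cos_0.
  destruct (cos_01 x Hx). pose proof (pow_le (cos x) n H0). pose proof (COS_bound (c*x)). nra.
Qed.

Lemma J_gap n : J 0 n - J (2/3) n <= 2*(J 0 n - J 0 (n+2)).
Proof.
  unfold J. pose proof PI_RGT_0.
  replace (RInt (jf 0 n) 0 (PI / 2) - RInt (jf (2/3) n) 0 (PI / 2)) with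
    (1 * RInt (jf 0 n) 0 (PI / 2) - 1 * RInt (jf (2/3) n) 0 (PI / 2)) by ring.
  replace (2 * (RInt (jf 0 n) 0 (PI / 2) - RInt (jf 0 (n+2)) 0 (PI / 2))) with
    (2 * RInt (jf 0 n) 0 (PI / 2) - 2 * RInt (jf 0 (n+2)) 0 (PI / 2)) by ring.
  rewrite <- !RInt_lin by apply jf_ex.
  apply RInt_le; try (apply (ex_RInt_continuous (V:=R_CompleteNormedModule)); intros; apply jf_lin_cont). lra.
  intros x Hx. unfold jf. rewrite Rmult_0_l, cos_0.
  destruct (cos_01 x Hx). pose proof (pow_le (cos x) n H0).
  replace (2/3*x) with (2*(x/3)) by field. rewrite cos_2a_sin.
  assert (0 <= sin (x/3) <= sin x).
  { split. apply sin_ge_0; lra. apply sin_incr_1; lra. }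
  pose proof (sin2_cos2 x). unfold Rsqr in H4.
  replace (n+2)%nat with (S (S n)) by lia. simpl pow.
  assert (sin (x/3) * sin (x/3) <= sin x * sin x) by nra.
  assert (cos x ^ n * (sin (x/3) * sin (x/3)) <= cos x ^ n * (sin x * sin x)) by (apply Rmult_le_compat_l; lra).
  nra.
Qed.

Lemma J_1 : J (2/3) 1 = 9/10.
Proof.
  unfold J.
  assert (D : forall x, is_derive (fun t => 3/10 * sin (5/3*t) + 3/2 * sin (t/3)) x (jf (2/3) 1 x)).
  { intro x. auto_derive. auto. unfold jf.
    replace (5/3*x) with (x + 2/3*x) by field. replace (x * / 3) with (x - 2/3*x) by field.
    rewrite cos_plus, cos_minus. simpl. field. }
  rewrite (is_RInt_unique _ _ _ _ (is_RInt_derive _ _ 0 (PI/2) (fun x _ => D x)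
     (fun x _ => jf_cont _ _ x))).
  unfold minus, plus, opp; simpl.
  replace (5/3*(PI/2)) with (PI - PI/6) by field. rewrite sin_PI_x.
  replace (PI/2/3) with (PI/6) by field. rewrite sin_PI6.
  rewrite Rmult_0_r, !sin_0. replace (0/3) with 0 by field. rewrite sin_0. field.
Qed.

Fixpoint w (k : nat) : R :=
  match k with
  | O => 5/36
  | S k => w k * ((INR k+1)^2 + (INR k+1) + 5/36)/((INR k+1)*(INR k+2))
  end.

Lemma J0_rec n : J 0 (n+2) = (INR n + 1)/(INR n + 2) * J 0 n.
Proof.
  pose proof (J_rec 0 n). pose proof (pos_INR n).
  apply (Rmult_eq_reg_l ((INR n + 2)^2 - 0^2)). rewrite H. field. lra. nra.
Qed.

Lemma J0_pos_even m : 0 < J 0 (2*m).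
Proof.
  induction m.
  - simpl. rewrite J0_0. pose proof PI_RGT_0. lra.
  - replace (2 * S m)%nat with (2*m+2)%nat by lia. rewrite J0_rec.
    pose proof (pos_INR (2*m)). apply Rmult_lt_0_compat; auto.
    apply Rdiv_lt_0_compat; lra.
Qed.

Lemma J0_pos n : 0 < J 0 n.
Proof.
  destruct (Nat.Even_or_Odd n) as [[m ->]|[m ->]].
  - apply J0_pos_even.
  - pose proof (J_mono0 (2*m+1)). replace (S (2*m+1)) with (2*(S m))%nat in H by lia.
    pose proof (J0_pos_even (S m)). lra.
Qed.

Lemma wJ k : w k * J (2/3) (2*k+1) = J 0 (2*k+2) / (2*PI).
Proof.
  pose proof PI_RGT_0.
  induction k.
  - simpl. rewrite J_1. replace 2%nat with (0+2)%nat by lia. rewrite J0_rec, J0_0. simpl. field. lra.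
  - replace (2 * S k + 1)%nat with ((2*k+1)+2)%nat by lia.
    replace (2 * S k + 2)%nat with ((2*k+2)+2)%nat by lia.
    rewrite J0_rec.
    pose proof (J_rec (2/3) (2*k+1)) as HR.
    pose proof (pos_INR k).
    assert (I2 : INR 2 = 2) by (simpl; ring). assert (I1 : INR 1 = 1) by reflexivity. rewrite plus_INR, mult_INR, I2, I1 in *.
    assert (Hne : (2 * INR k + 1 + 2) ^ 2 - (2 / 3) ^ 2 <> 0) by nra.
    assert (E : J (2/3) (2*k+1+2) = (2 * INR k + 1 + 2) * (2 * INR k + 1 + 1) * J (2/3) (2*k+1) / ((2 * INR k + 1 + 2) ^ 2 - (2 / 3) ^ 2)).
    { rewrite <- HR. field. nra. }
    rewrite E. simpl w.
    transitivity (w k * J (2 / 3) (2 * k + 1) * ((INR k + 1) ^ 2 + (INR k + 1) + 5 / 36) / ((INR k + 1) * (INR k + 2)) *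
      ((2 * INR k + 1 + 2) * (2 * INR k + 1 + 1)) / ((2 * INR k + 1 + 2) ^ 2 - (2 / 3) ^ 2)).
    { field. repeat split; try lra; nra. }
    rewrite IHk. field. repeat split; try lra; nra.
Qed.

Lemma w_bound k : 0 < w k /\ Rabs (w k - 1/(2*PI)) <= 1/(INR k + 1).
Proof.
  pose proof PI_RGT_0. pose proof PI_4. pose proof (pos_INR k).
  set (n := (2*k+1)%nat).
  assert (Hn : INR n = 2 * INR k + 1) by (unfold n; rewrite plus_INR, mult_INR; simpl; ring).
  pose proof (J0_pos n) as Ha. pose proof (J_gap n) as Hg. rewrite J0_rec in Hg.
  pose proof (J_le0 (2/3) n) as Hc.
  pose proof (J_mono0 n) as Hm1. pose proof (J_mono0 (S n)) as Hm2.
  replace (S (S n)) with (n+2)%nat in Hm2 by lia. rewrite J0_rec in Hm2.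
  pose proof (wJ k) as HW. fold n in HW. replace (2*k+2)%nat with (S n) in HW by (unfold n; lia).
  set (a := J 0 n) in *. set (b := J (2/3) n) in *. set (a1 := J 0 (S n)) in *.
  rewrite Hn in *.
  assert (Hb : a * (2*INR k+1) / (2*INR k + 3) <= b).
  { apply (Rmult_le_reg_r (2*INR k+3)). lra. unfold Rdiv. rewrite Rmult_assoc, Rinv_l by lra.
    assert (a - b <= 2 * a / (2 * INR k + 3)).
    { replace (2 * a / (2 * INR k + 3)) with (2 * (a - (2 * INR k + 1 + 1) / (2 * INR k + 1 + 2) * a)) by (field; lra). lra. }
    apply (Rmult_le_compat_r (2*INR k+3)) in H2. 2: lra.
    replace (2 * a / (2 * INR k + 3) * (2 * INR k + 3)) with (2*a) in H2 by (field; lra). nra. }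
  assert (Hbp : 0 < b).
  { eapply Rlt_le_trans; [|exact Hb]. apply Rdiv_lt_0_compat; nra. }
  assert (Ew : w k = a1 / (2*PI) / b) by (rewrite <- HW; field; lra).
  assert (Hup : a1 / b <= (2*INR k+3)/(2*INR k+1)).
  { apply (Rmult_le_reg_r b). auto. unfold Rdiv at 1. rewrite Rmult_assoc, Rinv_l, Rmult_1_r by lra.
    apply Rle_trans with a. lra.
    apply (Rmult_le_compat_l ((2 * INR k + 3) / (2 * INR k + 1))) in Hb.
    2: { apply Rlt_le, Rdiv_lt_0_compat; lra. }
    replace ((2 * INR k + 3) / (2 * INR k + 1) * (a * (2 * INR k + 1) / (2 * INR k + 3))) with a in Hb by (field; lra).
    lra. }
  assert (Hlo : (2*INR k+2)/(2*INR k+3) <= a1 / b).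
  { apply (Rmult_le_reg_r b). auto. unfold Rdiv at 2. rewrite Rmult_assoc, Rinv_l, Rmult_1_r by lra.
    apply Rle_trans with ((2 * INR k + 1 + 1) / (2 * INR k + 1 + 2) * a).
    2: lra.
    replace ((2 * INR k + 1 + 1) / (2 * INR k + 1 + 2)) with ((2*INR k+2)/(2*INR k+3)) by (f_equal; ring).
    apply Rmult_le_compat_l. apply Rlt_le, Rdiv_lt_0_compat; lra. lra. }
  assert (Ew2 : w k - 1/(2*PI) = (a1/b - 1)/(2*PI)) by (rewrite Ew; field; lra).
  assert (0 < (2 * INR k + 1 + 1) / (2 * INR k + 1 + 2) * a) by (apply Rmult_lt_0_compat; [apply Rdiv_lt_0_compat|]; lra).
  split.
  - rewrite Ew. apply Rdiv_lt_0_compat; [|auto]. apply Rdiv_lt_0_compat; lra.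
  - rewrite Ew2. unfold Rdiv at 1. rewrite Rabs_mult, Rabs_inv, (Rabs_right (2*PI)) by lra.
    assert (Rabs (a1/b - 1) <= 2/(2*INR k+1)).
    { apply Rabs_le. split.
      - apply Rle_trans with ((2*INR k+2)/(2*INR k+3) - 1). 2: lra.
        replace ((2*INR k+2)/(2*INR k+3) - 1) with (-(1/(2*INR k+3))) by (field; lra).
        apply Ropp_le_contravar.
        apply (Rle_trans _ (1/(2*INR k+1))).
        + apply Rmult_le_compat_l; [lra| apply Rinv_le_contravar; lra].
        + unfold Rdiv; apply Rmult_le_compat_r; [apply Rlt_le, Rinv_0_lt_compat; lra | lra].
      - apply Rle_trans with ((2*INR k+3)/(2*INR k+1) - 1). lra.
        right. field. lra. }
    apply Rle_trans with (2/(2*INR k+1) * / (2*PI)).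
    apply Rmult_le_compat_r. apply Rlt_le, Rinv_0_lt_compat; lra. auto.
    replace (2 / (2 * INR k + 1) * / (2 * PI)) with (1/(PI*(2*INR k+1))) by (field; lra).
    apply Rmult_le_compat_l. lra. apply Rinv_le_contravar. lra. pose proof PI2_1. nra.
Qed.

Lemma dl_len n : length (dl_list n) = n.
Proof.
  induction n as [|[|[|k]] IH]; simpl; auto.
  rewrite length_app in *. simpl in *. rewrite IH. lia.
Qed.

Lemma dl_step n j : (j < n)%nat -> nth j (dl_list (S n)) 0 = nth j (dl_list n) 0.
Proof.
  intros H. destruct n as [|[|k]]; try lia.
  - destruct j; [|lia]. reflexivity.
  - change (dl_list (S (S (S k)))) with (dl_list (S (S k)) ++ (dnext (dl_list (S (S k))) (S (S k)) :: nil)).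
    apply app_nth1. rewrite dl_len. auto.
Qed.

Lemma dl_prefix m i : (1 <= i <= m)%nat -> dget (dl_list m) i = d i.
Proof.
  intros [H1 H2]. unfold d, dget. induction H2; auto.
  rewrite dl_step by lia. auto.
Qed.

Lemma d_rec m : (1 <= m)%nat -> d (S m) = d m +
  fold_right Rplus 0 (map (fun i => d i * d (m - i) / (INR (m + 1) * Binomial.C m i)) (seq 1 (m - 1))).
Proof.
  intros Hm. destruct m as [|[|k]]; try lia.
  - unfold d, dget. simpl. ring.
  - unfold d at 1, dget at 1.
    change (dl_list (S (S (S k)))) with (dl_list (S (S k)) ++ (dnext (dl_list (S (S k))) (S (S k)) :: nil)).
    rewrite app_nth2 by (rewrite dl_len; lia). rewrite dl_len.
    replace (S (S (S k)) - 1 - S (S k))%nat with 0%nat by lia. change (nth 0 (dnext (dl_list (S (S k))) (S (S k)) :: nil) 0) with (dnext (dl_list (S (S k))) (S (S k))).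
    unfold dnext. rewrite dl_prefix by lia. f_equal. f_equal.
    apply map_ext_in. intros i Hi. apply in_seq in Hi.
    rewrite !dl_prefix by lia. reflexivity.
Qed.

Lemma d0 : d 0 = 0.
Proof. reflexivity. Qed.

Definition e (i : nat) : R := INR (fact i) * d i.

Lemma fold_scal K (F : nat -> R) s :
  K * fold_right Rplus 0 (map F s) = fold_right Rplus 0 (map (fun i => K * F i) s).
Proof. induction s; simpl; [ring|]. rewrite <- IHs. ring. Qed.

Lemma e_rec m : (1 <= m)%nat -> e (S m) = INR (S m) * e m +
  fold_right Rplus 0 (map (fun i => e i * e (m - i)) (seq 1 (m - 1))).
Proof.
  intros Hm. unfold e at 1. rewrite d_rec by auto.
  rewrite Rmult_plus_distr_l, fold_scal. f_equal.
  - unfold e. change (fact (S m)) with (S m * fact m)%nat. rewrite mult_INR. ring.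
  - f_equal. apply map_ext_in. intros i Hi. apply in_seq in Hi. unfold e, Binomial.C.
    change (fact (S m)) with (S m * fact m)%nat. rewrite mult_INR.
    replace (m + 1)%nat with (S m) by lia.
    pose proof (INR_fact_neq_0 m). pose proof (INR_fact_neq_0 i). pose proof (INR_fact_neq_0 (m - i)).
    assert (INR (S m) <> 0) by (apply not_0_INR; lia).
    field. auto.
Qed.

Lemma e0 : e 0 = 0.
Proof. unfold e. rewrite d0. ring. Qed.
Definition c0 : R := 5/36.
Lemma e1 : e 1 = c0.
Proof. unfold e, d, dget, c0. simpl. ring. Qed.

Lemma fact_ineq m i : (1 <= i)%nat -> (i < m)%nat -> (fact i * fact (m - i) <= fact (m - 1))%nat.
Proof.
  revert i. induction m as [|m IH]; intros i H1 H2; [lia|].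
  destruct (Nat.eq_dec i m) as [->|Hne].
  - replace (S m - m)%nat with 1%nat by lia. replace (S m - 1)%nat with m by lia. simpl. lia.
  - replace (S m - i)%nat with (S (m - i)) by lia. replace (S m - 1)%nat with m by lia.
    specialize (IH i H1 ltac:(lia)).
    destruct m as [|m']; [lia|].
    replace (S m' - 1)%nat with m' in IH by lia.
    change (fact (S (S m' - i))) with (S (S m' - i) * fact (S m' - i))%nat.
    change (fact (S m')) with (S m' * fact m')%nat.
    assert (S (S m' - i) <= S m')%nat by lia.
    nia.
Qed.

Definition v (n : nat) : R := match n with O => 1 | S k => INR (fact k) * w k end.

Lemma v_rec_std n : INR (S n) * v (S n) = (INR n * INR n + INR n + c0) * v n.
Proof.
  unfold c0. destruct n as [|k].
  - simpl. ring.
  - unfold v. change (fact (S k)) with (S k * fact k)%nat. rewrite mult_INR.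
    simpl w. rewrite !S_INR. pose proof (pos_INR k).
    field. lra.
Qed.

Lemma w_pos k : 0 < w k.
Proof. apply w_bound. Qed.

Lemma w_le2 k : w k <= 2.
Proof.
  destruct (w_bound k) as [_ H]. apply Rabs_le_between in H. destruct H as [_ H].
  pose proof PI2_1. pose proof (pos_INR k).
  assert (1/(2*PI) <= 1) by (apply Rmult_le_reg_l with (2*PI); [lra|]; field_simplify; lra).
  assert (1/(INR k + 1) <= 1).
  { unfold Rdiv. rewrite Rmult_1_l. rewrite <- Rinv_1. apply Rinv_le_contravar; lra. }
  lra.
Qed.

Lemma c0_pos : 0 <= c0.
Proof. unfold c0; lra. Qed.

Module MC.
From mathcomp Require Import all_boot all_algebra.
From mathcomp Require Import Rstruct ring.
Import GRing.Theory Num.Theory.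
Local Open Scope ring_scope.
Definition conv (a b : nat -> R) (n : nat) : R := \sum_(j < n.+1) a j * b (n - j)%N.

Lemma coef_conv (a b : nat -> R) N k : (k < N)%N ->
  conv a b k = ((\poly_(i < N) a i) * (\poly_(i < N) b i))`_k.
Proof.
move=> kN; rewrite coefM /conv; apply: eq_bigr => j _.
have jk : (j < N)%N by apply: leq_ltn_trans kN; rewrite -ltnS.
have jk2 : (k - j < N)%N by apply: leq_ltn_trans kN; apply: leq_subr.
by rewrite !coef_poly jk jk2.
Qed.

Lemma conv_assoc a b c n : conv (conv a b) c n = conv a (conv b c) n.
Proof.
set N := n.+1.
have -> : conv (conv a b) c n = (((\poly_(i < N) a i) * (\poly_(i < N) b i)) * (\poly_(i < N) c i))`_n.
  rewrite coefM {1}/conv; apply: eq_bigr => j _.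
  have jk : (j < N)%N by rewrite /N ltnS -ltnS.
  have jk2 : (n - j < N)%N by rewrite /N ltnS leq_subr.
  by rewrite (@coef_conv _ _ _ _ jk) coef_poly jk2.
rewrite -mulrA coefM {1}/conv; apply: eq_bigr => j _.
have jk : (j < N)%N by rewrite /N ltnS -ltnS.
have jk2 : (n - j < N)%N by rewrite /N ltnS leq_subr.
by rewrite (@coef_conv _ _ _ _ jk2) coef_poly jk.
Qed.

Lemma conv_identity (c : R) (e v : nat -> R) :
  e 0%N = 0 ->
  (forall i, e i.+1 = i.+1%:R * e i + conv e e i + (if i == 0%N then c else 0)) ->
  (forall n, n.+1%:R * v n.+1 = (n%:R * n%:R + n%:R + c) * v n) ->
  forall l, conv e v l = l%:R * v l.
Proof.
move=> e0 He Hv l; elim/ltn_ind: l => l IH.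
case: l IH => [|l] IH.
  by rewrite /conv big_ord_recl big_ord0 e0 !mul0r addr0.
rewrite /conv big_ord_recl e0 mul0r add0r.
have -> : \sum_(i < l.+1) e (bump 0 i) * v (l.+1 - bump 0 i)%N
   = \sum_(i < l.+1) (i.+1%:R * e i * v (l - i)%N + conv e e i * v (l - i)%N
                      + (if i == 0%N :> nat then c else 0) * v (l - i)%N).
  apply: eq_bigr => i _; rewrite /bump leq0n add1n subSS He; ring.
rewrite !big_split /=.
have -> : \sum_(i < l.+1) (if i == 0%N :> nat then c else 0) * v (l - i)%N = c * v l.
  rewrite big_ord_recl /= subn0 big1 ?addr0 // => i _; by rewrite mul0r.
have -> : \sum_(i < l.+1) conv e e i * v (l - i)%N = \sum_(i < l.+1) (l - i)%:R * e i * v (l - i)%N.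
  have := conv_assoc e e v l; rewrite {1}/conv => ->; rewrite /conv.
  apply: eq_bigr => i _.
  have hi : (l - i < l.+1)%N by rewrite ltnS leq_subr.
  have := IH _ hi; rewrite /conv => ->; ring.
rewrite -big_split /=.
have -> : \sum_(i < l.+1) (i.+1%:R * e i * v (l - i)%N + (l - i)%:R * e i * v (l - i)%N)
    = l.+1%:R * \sum_(i < l.+1) e i * v (l - i)%N.
  rewrite mulr_sumr; apply: eq_bigr => i _.
  have hi : (i <= l)%N by rewrite -ltnS.
  have : (i.+1 + (l - i))%N = l.+1 by rewrite addSn subnKC.
  move=> E; rewrite -mulrDl -mulrDl -natrD E; ring.
have hl : (l < l.+1)%N by [].
have := IH _ hl; rewrite /conv => ->.
rewrite Hv; ring.
Qed.

Lemma fold_sum (F : nat -> R) n a :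
  fold_right Rplus 0 (map F (List.seq a n)) = \sum_(i < n) F (a + i)%N.
Proof.
elim: n a => [|n IH] a; first by rewrite big_ord0.
rewrite /= IH big_ord_recl addn0; congr (_ + _).
by apply: eq_bigr => i _; rewrite lift0 addSnnS.
Qed.

Lemma sum_fold (F : nat -> R) m : (1 <= m)%N -> F 0%N = 0 -> F m = 0 ->
  \sum_(i < m.+1) F i = fold_right Rplus 0 (map F (List.seq 1 (m - 1))).
Proof.
case: m => [|m] // _ F0 Fm.
rewrite fold_sum big_ord_recl F0 add0r big_ord_recr /= Fm addr0 subn1 /=.
by apply: eq_bigr => i _; rewrite /bump leq0n.
Qed.

Lemma e_conv_rec i : e i.+1 = i.+1%:R * e i + conv e e i + (if i == 0%N then c0 else 0).
Proof.
case: i => [|m].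
  rewrite /= e1 /conv big_ord_recl big_ord0 e0 R0E; ring.
rewrite /= addr0 e_rec; last by apply/leP.
rewrite /conv (@sum_fold (fun j => e j * e (m.+1 - j)%N)) //.
- by rewrite INRE.
- by rewrite e0 mul0r.
- by rewrite subnn e0 mulr0.
Qed.

Lemma v_rec n : n.+1%:R * v n.+1 = (n%:R * n%:R + n%:R + c0) * v n.
Proof. rewrite -!INRE; exact: v_rec_std n. Qed.

Lemma ev_id l : conv e v l = l%:R * v l.
Proof. exact: (@conv_identity c0 e v e0 e_conv_rec v_rec l). Qed.


Lemma c0_ge0 : 0 <= c0.
Proof. apply/RleP; exact: c0_pos. Qed.

Lemma e_ge0 i : 0 <= e i.
Proof.
elim/ltn_ind: i => [[|i]] IH; first by rewrite e0.
rewrite e_conv_rec; apply: addr_ge0; [apply: addr_ge0|].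
- by apply: mulr_ge0; [apply: ler0n | apply: IH].
- apply: sumr_ge0 => j _; apply: mulr_ge0; apply: IH.
  + by rewrite ltnS -ltnS.
  + by rewrite ltnS leq_subr.
- by case: (i == 0%N); [apply: c0_ge0|].
Qed.

Lemma v_ge0 n : 0 <= v n.
Proof.
case: n => [|k] /=; first exact: ler01.
apply: mulr_ge0; apply/RleP; [apply: pos_INR | apply: Rlt_le; apply: w_pos].
Qed.

Definition Ssum k := \sum_(i < k.+1) e i * v (k.+1 - i)%N.

Lemma Ssum_ge0 k : Rle 0 (Ssum k).
Proof. apply/RleP; apply: sumr_ge0 => i _; apply: mulr_ge0; [apply: e_ge0 | apply: v_ge0]. Qed.

Lemma main_id k : e k.+1 + Ssum k = INR (fact k.+1) * w k.
Proof.
have := ev_id k.+1; rewrite /conv big_ord_recr /= subnn /= mulr1 => H.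
have -> : INR (fact k.+1) = INR k.+1 * INR (fact k) by exact: (mult_INR k.+1 (fact k)).
by rewrite addrC /Ssum H !INRE mulrA.
Qed.

Lemma e_ge0_std i : Rle 0 (e i).
Proof. apply/RleP; exact: e_ge0. Qed.

End MC.

Set Bullet Behavior "Strict Subproofs".

Lemma fact_pos n : 0 < INR (fact n).
Proof. apply lt_0_INR. apply lt_O_fact. Qed.

Lemma d_le_w k : d (S k) <= w k.
Proof.
  pose proof (MC.main_id k) as H. change (e (S k) + MC.Ssum k = INR (fact (S k)) * w k) in H.
  pose proof (MC.Ssum_ge0 k). unfold e in H. pose proof (fact_pos (S k)).
  apply (Rmult_le_reg_l (INR (fact (S k)))); auto. lra.
Qed.

Lemma d_le2 i : d i <= 2.
Proof.
  destruct i. rewrite d0. lra.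
  pose proof (d_le_w i). pose proof (w_le2 i). lra.
Qed.

Lemma term_bound k i : (i < k)%nat -> e i * v (S k - i) <= 4 * INR (fact (k-1)).
Proof.
  intros Hi. destruct i as [|i].
  - rewrite e0, Rmult_0_l. pose proof (fact_pos (k-1)). lra.
  - replace (S k - S i)%nat with (S (k - S i)) by lia. unfold v, e.
    pose proof (d_le2 (S i)). pose proof (w_le2 (k - S i)).
    pose proof (MC.e_ge0_std (S i)) as He. unfold e in He.
    pose proof (fact_pos (S i)). pose proof (fact_pos (k - S i)).
    assert (0 <= d (S i)).
    { apply (Rmult_le_reg_l (INR (fact (S i)))); auto. lra. }
    pose proof (w_pos (k - S i)).
    pose proof (fact_ineq k (S i) ltac:(lia) Hi) as Hf. apply le_INR in Hf. rewrite mult_INR in Hf.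
    assert (INR (fact (S i)) * d (S i) <= INR (fact (S i)) * 2) by (apply Rmult_le_compat_l; lra).
    assert (INR (fact (k - S i)) * w (k - S i) <= INR (fact (k - S i)) * 2) by (apply Rmult_le_compat_l; lra).
    apply Rle_trans with ((INR (fact (S i)) * 2) * (INR (fact (k - S i)) * 2)).
    + apply Rmult_le_compat; try lra. apply Rmult_le_pos; lra.
    + nra.
Qed.

Lemma last_bound k : e k * v 1 <= 4 * INR (fact k).
Proof.
  unfold v, e. simpl fact. simpl w. pose proof (d_le2 k). pose proof (fact_pos k).
  pose proof (MC.e_ge0_std k) as He. unfold e in He.
  simpl INR. nra.
Qed.

Lemma kfact k : INR k * INR (fact (k-1)) <= INR (fact k).
Proof.
  destruct k. simpl. lra.
  replace (S k - 1)%nat with k by lia. change (fact (S k)) with (S k * fact k)%nat.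
  rewrite mult_INR. lra.
Qed.


Definition B1 k := 4 * INR (fact (k-1)).
Definition B2 k := 4 * INR (fact k).
Definition B3 k := 8 * INR (fact k).
Lemma B_comb k : INR k * B1 k + B2 k <= B3 k.
Proof. unfold B1, B2, B3. pose proof (kfact k). lra. Qed.

Module MC2.
From mathcomp Require Import all_boot all_order all_algebra.
From mathcomp Require Import Rstruct.
Import Order.TTheory GRing.Theory Num.Theory.
Local Open Scope ring_scope.

Lemma Ssum_le_mc k : MC.Ssum k <= B3 k.
Proof.
rewrite /MC.Ssum big_ord_recr /= subSnn.
have H1 : \sum_(i < k) e i * v (k.+1 - i)%N <= \sum_(i < k) B1 k.
  apply: ler_sum => i _; apply/RleP. have hi : (i < k)%coq_nat by apply/ssrnat.ltP. exact: (term_bound k i hi).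
rewrite sumr_const card_ord -mulr_natl in H1.
have H2 : e k * v 1 <= B2 k by apply/RleP; exact: last_bound.
have H3 : k%:R * B1 k + B2 k <= B3 k by apply/RleP; rewrite -INRE; exact: B_comb.
apply: le_trans H3; exact: lerD.
Qed.

Lemma Ssum_le k : Rle (MC.Ssum k) (B3 k).
Proof. apply/RleP; exact: Ssum_le_mc. Qed.
End MC2.

Set Bullet Behavior "Strict Subproofs".

Lemma key k : 0 <= w k - d (S k) <= 8 / INR (S k).
Proof.
  pose proof (MC.main_id k) as H. change (e (S k) + MC.Ssum k = INR (fact (S k)) * w k) in H.
  pose proof (MC.Ssum_ge0 k). pose proof (MC2.Ssum_le k). unfold B3 in *. unfold e in H.
  pose proof (fact_pos k). pose proof (lt_0_INR (S k) ltac:(lia)).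
  change (fact (S k)) with (S k * fact k)%nat in H. rewrite mult_INR in H.
  assert (E : w k - d (S k) = MC.Ssum k / (INR (S k) * INR (fact k))).
  { assert (ES : MC.Ssum k = INR (S k) * INR (fact k) * w k - INR (S k) * INR (fact k) * d (S k)) by lra.
    rewrite ES. field. split; lra. }
  rewrite E. split.
  - apply Rmult_le_pos; auto. apply Rlt_le, Rinv_0_lt_compat. nra.
  - replace (8 / INR (S k)) with ((8 * INR (fact k)) / (INR (S k) * INR (fact k))) by (field; lra).
    unfold Rdiv. apply Rmult_le_compat_r. apply Rlt_le, Rinv_0_lt_compat; nra. auto.
Qed.

Theorem lemma4p1 :
  exists (K : R) (N : nat), forall l : nat, (N <= l)%nat ->
    Rabs (1 / (2 * PI) - d l) <= K / INR l.
Proof.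
  exists 9, 1%nat. intros l Hl. destruct l as [|k]; [lia|].
  pose proof (key k). destruct (w_bound k) as [_ Hw].
  rewrite S_INR in *. pose proof (pos_INR k).
  replace (1 / (2*PI) - d (S k)) with ((w k - d (S k)) - (w k - 1/(2*PI))) by ring.
  eapply Rle_trans. apply Rabs_triang.
  rewrite Rabs_Ropp, Rabs_right by lra.
  replace (9 / (INR k + 1)) with (8 / (INR k + 1) + 1 / (INR k + 1)) by (field; lra).
  lra.
Qed.
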